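(* Let $G = N \rtimes H$ with $N,H$ finite abelian. For each $H$-orbit $\mathcal{O}_\alpha = \{v_1,\dots,v_{c_\alpha}\}$ in $P_N$ with stabilizer $H_\alpha$ and idempotent eigenbasis $\{u^{[\alpha]}_1,\dots,u^{[\alpha]}_{|H_\alpha|}\}$ of $\mathbb{C}[H_\alpha]$, let $J^{[\alpha]}_p = \sum_{i=1}^{c_\alpha} v_iu^{[\alpha]}_p$. Then the set $\{J^{[\alpha]}_p : \alpha \text{ an orbit}, 1\le p\le |H_\alpha|\}$ is exactly the set of primitive central idempotents of $\mathbb{C}[G]$.
   Context: $N$ is normal in $G$, $H$ acts on $N$ by conjugation. For a finite abelian group $K$, the idempotent eigenbasis of $\mathbb{C}[K]$ is the unique basis of $\mathbb{C}[K]$ consisting of simultaneous eigenvectors of left multiplication by elements of $\mathbb{C}[K]$ and consisting of pairwise orthogonal idempotents. $P_N$ is the idempotent eigenbasis of $\mathbb{C}[N]$; conjugation by $H$ permutes $P_N$; $H_\alpha$ is the common stabilizer in $H$ of the elements of $\mathcal{O}_\alpha$. A primitive central idempotent of an algebra $A$ is a nonzero central idempotent $J$ that cannot be written as $J=I_1+I_2$ with $I_1,I_2$ nonzero central idempotents satisfying $I_1I_2=I_2I_1=0$. *)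

(* Defs.v *)
(* The complex group algebra C[K] of a subgroup K of a finite
   group gT is modelled inside the ambient algebra of all functions
   gT -> algC (algebraic complex numbers) with convolution product; C[K] is
   the subalgebra of functions supported on K. *)
From HB Require Import structures.
From mathcomp Require Import all_boot all_order all_algebra all_fingroup all_solvable all_field.
Set Implicit Arguments. Unset Strict Implicit. Unset Printing Implicit Defensive.
Import GRing.Theory Num.Theory.
Local Open Scope ring_scope.

Section GroupAlgebra.
Variable gT : finGroupType.

(* elements sum_x f(x) x of the group algebra *)
Definition ga := {ffun gT -> algC}.

Definition gmul (f g : ga) : ga :=
  [ffun x => \sum_(y : gT) f y * g (y^-1 * x)%g].

Definition in_ga (K : {set gT}) (f : ga) : Prop :=
  forall x, x \notin K -> f x = 0.

(* conjugation h f h^-1 of f by h : coefficient at x is f(h^-1 x h) *)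
Definition gconj (f : ga) (h : gT) : ga := [ffun x => f (x ^ h)%g].

Definition is_idem_eigenbasis (K : {set gT}) (B : seq ga) : Prop :=
  [/\ (forall b, b \in B -> in_ga K b),
      (forall c : nat -> algC,
          (forall x, \sum_(i < size B) c i * (nth 0 B i) x = 0) ->
          forall i, (i < size B)%N -> c i = 0),
      (forall f, in_ga K f -> exists c : nat -> algC,
          forall x, f x = \sum_(i < size B) c i * (nth 0 B i) x),
      (forall a b, in_ga K a -> b \in B ->
          exists lam : algC, forall x, gmul a b x = lam * b x) &
      (forall i j, (i < size B)%N -> (j < size B)%N ->
          gmul (nth 0 B i) (nth 0 B j) = if i == j then nth 0 B i else 0)].

Definition hconj_orbit (H : {set gT}) (v : ga) : seq ga :=
  undup [seq gconj v h | h <- enum H].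

Definition orbit_stab (H : {set gT}) (v : ga) : {set gT} :=
  [set h in H | all (fun w => gconj w h == w) (hconj_orbit H v)].

Definition central_idem (G : {set gT}) (J : ga) : Prop :=
  [/\ in_ga G J, (forall a, in_ga G a -> gmul a J = gmul J a) & gmul J J = J].

Definition primitive_central_idem (G : {set gT}) (J : ga) : Prop :=
  [/\ J != 0, central_idem G J &
      ~ (exists I1 I2 : ga, [/\ I1 != 0, I2 != 0, central_idem G I1,
            central_idem G I2 & [/\ J = I1 + I2, gmul I1 I2 = 0 & gmul I2 I1 = 0]])].

End GroupAlgebra.

(* Main.v *)
Require Import Defs.
From HB Require Import structures.
From mathcomp Require Import all_boot all_order all_algebra all_fingroup all_solvable all_field.
Import GRing.Theory Num.Theory.
Local Open Scope ring_scope.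

Set Implicit Arguments. Unset Strict Implicit. Unset Printing Implicit Defensive.

Section Alg.
Variable gT : finGroupType.
Implicit Types f g h z : ga gT.

Definition delta (a : gT) : ga gT := [ffun x => (x == a)%:R].
Definition sc (c : algC) (f : ga gT) : ga gT := [ffun x => c * f x].

Lemma scE c f x : sc c f x = c * f x.
Proof. by rewrite ffunE. Qed.

Lemma gmulE f g x : gmul f g x = \sum_y f y * g (y^-1 * x)%g.
Proof. by rewrite ffunE. Qed.

Lemma gmulE' f g x : gmul f g x = \sum_y f (x * y^-1)%g * g y.
Proof.
have inj : injective (fun y => (x * y^-1)%g) by move=> a b /mulgI /invg_inj.
rewrite gmulE (reindex_inj inj).
by apply: eq_bigr => y _; rewrite invMg invgK mulgKV.
Qed.

Lemma gmulA f g h : gmul (gmul f g) h = gmul f (gmul g h).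
Proof.
apply/ffunP => x; rewrite gmulE.
under eq_bigr do rewrite gmulE mulr_suml.
rewrite exchange_big /= gmulE; apply: eq_bigr => z _.
rewrite gmulE mulr_sumr (reindex_inj (mulgI z)) /=.
by apply: eq_bigr => w _; rewrite mulKg invMg mulgA mulrA.
Qed.

Lemma gmulDl f g h : gmul (f + g) h = gmul f h + gmul g h.
Proof.
by apply/ffunP => x; rewrite !ffunE -big_split; apply: eq_bigr => y _; rewrite ffunE mulrDl.
Qed.

Lemma gmulDr f g h : gmul f (g + h) = gmul f g + gmul f h.
Proof.
by apply/ffunP => x; rewrite !ffunE -big_split; apply: eq_bigr => y _; rewrite ffunE mulrDr.
Qed.

Lemma gmulZl (c : algC) f g : gmul (sc c f) g = sc c (gmul f g).
Proof.
apply/ffunP => x; rewrite !ffunE mulr_sumr; apply: eq_bigr => y _.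
by rewrite ffunE mulrA.
Qed.

Lemma gmulZr (c : algC) f g : gmul f (sc c g) = sc c (gmul f g).
Proof.
apply/ffunP => x; rewrite !ffunE mulr_sumr; apply: eq_bigr => y _.
by rewrite ffunE mulrCA.
Qed.

Lemma gmul0l f : gmul 0 f = 0.
Proof. by apply/ffunP => x; rewrite !ffunE big1 // => y _; rewrite ffunE mul0r. Qed.

Lemma gmul0r f : gmul f 0 = 0.
Proof. by apply/ffunP => x; rewrite !ffunE big1 // => y _; rewrite ffunE mulr0. Qed.

Lemma gmulNl f g : gmul (- f) g = - gmul f g.
Proof.
apply/ffunP => x; rewrite !ffunE -sumrN; apply: eq_bigr => y _.
by rewrite ffunE mulNr.
Qed.

Lemma gmulNr f g : gmul f (- g) = - gmul f g.
Proof.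
apply/ffunP => x; rewrite !ffunE -sumrN; apply: eq_bigr => y _.
by rewrite ffunE mulrN.
Qed.

Lemma gmulBl f g h : gmul (f - g) h = gmul f h - gmul g h.
Proof. by rewrite gmulDl gmulNl. Qed.

Lemma gmulBr f g h : gmul f (g - h) = gmul f g - gmul f h.
Proof. by rewrite gmulDr gmulNr. Qed.

Lemma gmul_suml (I : Type) (r : seq I) (F : I -> ga gT) g :
  gmul (\sum_(i <- r) F i) g = \sum_(i <- r) gmul (F i) g.
Proof.
elim: r => [|i r IH]; first by rewrite !big_nil gmul0l.
by rewrite !big_cons gmulDl IH.
Qed.

Lemma gmul_sumr (I : Type) (r : seq I) (F : I -> ga gT) g :
  gmul g (\sum_(i <- r) F i) = \sum_(i <- r) gmul g (F i).
Proof.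
elim: r => [|i r IH]; first by rewrite !big_nil gmul0r.
by rewrite !big_cons gmulDr IH.
Qed.

Lemma gmul_deltaL a f x : gmul (delta a) f x = f (a^-1 * x)%g.
Proof.
rewrite gmulE (bigD1 a) //= big1 ?addr0 => [|y /negbTE ya]; rewrite ffunE ?ya ?mul0r //.
by rewrite eqxx mul1r.
Qed.

Lemma gmul_deltaR a f x : gmul f (delta a) x = f (x * a^-1)%g.
Proof.
rewrite gmulE' (bigD1 a) //= big1 ?addr0 => [|y /negbTE ya]; rewrite ffunE ?ya ?mulr0 //.
by rewrite eqxx mulr1.
Qed.

Lemma gmul1l f : gmul (delta 1) f = f.
Proof. by apply/ffunP => x; rewrite gmul_deltaL invg1 mul1g. Qed.

Lemma gmul1r f : gmul f (delta 1) = f.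
Proof. by apply/ffunP => x; rewrite gmul_deltaR invg1 mulg1. Qed.

Lemma gconjE f k x : gconj f k x = f (x ^ k)%g.
Proof. by rewrite ffunE. Qed.

Lemma gconjM f g k : gconj (gmul f g) k = gmul (gconj f k) (gconj g k).
Proof.
apply/ffunP => x; rewrite !ffunE (reindex_inj (@conjg_inj _ k)) /=.
by apply: eq_bigr => y _; rewrite !ffunE -conjVg -conjMg.
Qed.

Lemma gconjJ f a b : gconj (gconj f a) b = gconj f (b * a)%g.
Proof. by apply/ffunP => x; rewrite !ffunE conjgM. Qed.

Lemma gconj1 f : gconj f 1 = f.
Proof. by apply/ffunP => x; rewrite !ffunE conjg1. Qed.

Lemma gconjZ (c : algC) f k : gconj (sc c f) k = sc c (gconj f k).
Proof. by apply/ffunP => x; rewrite !ffunE. Qed.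

Lemma gconjK f k : gconj (gconj f k) k^-1 = f.
Proof. by rewrite gconjJ mulVg gconj1. Qed.

Lemma gconj_inj (k : gT) : injective (fun f : ga gT => gconj f k).
Proof. by move=> f g /(congr1 (fun f => gconj f k^-1)); rewrite /= !gconjK. Qed.

Lemma gconj0 (k : gT) : gconj 0 k = 0.
Proof. by apply/ffunP => x; rewrite !ffunE. Qed.

Lemma in_ga_mul (K : {group gT}) f g : in_ga K f -> in_ga K g -> in_ga K (gmul f g).
Proof.
move=> fK gK x xK; rewrite gmulE big1 // => y _.
have [yK|yK] := boolP (y \in K); last by rewrite fK ?mul0r.
by rewrite gK ?mulr0 // groupMl ?groupV.
Qed.

Lemma in_ga_sub (K L : {set gT}) f : K \subset L -> in_ga K f -> in_ga L f.
Proof. by move=> sKL fK x xL; apply: fK; apply: contra xL; apply: (subsetP sKL). Qed.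

Lemma central_crit (G : {group gT}) z :
  (forall g x : gT, g \in G -> z (x ^ g)%g = z x) ->
  forall a, in_ga G a -> gmul a z = gmul z a.
Proof.
move=> zc a aG; apply/ffunP => x; rewrite gmulE gmulE'; apply: eq_bigr => y _.
have [yG|yG] := boolP (y \in G); last by rewrite aG ?mulr0 ?mul0r.
rewrite mulrC -(zc y (x * y^-1)%g yG) conjgE.
by rewrite mulgKV.
Qed.

Lemma central_conj (G : {group gT}) z :
  (forall a, in_ga G a -> gmul a z = gmul z a) ->
  forall g x : gT, g \in G -> z (x ^ g)%g = z x.
Proof.
move=> zc g x gG.
have dG : in_ga G (delta g) by move=> y yG; rewrite ffunE; case: eqP yG => // ->; rewrite gG.
have := congr1 (fun f : ga gT => f (x * g)%g) (zc _ dG).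
by rewrite gmul_deltaL gmul_deltaR mulgK conjgE mulgA.
Qed.

End Alg.

Section EB.
Variable gT : finGroupType.
Variables (K : {set gT}) (B : seq (ga gT)).
Hypothesis hB : is_idem_eigenbasis K B.

Lemma EB_in b : b \in B -> in_ga K b.
Proof. by case: hB => h _ _ _ _; apply: h. Qed.

Lemma EB_eig a b : in_ga K a -> b \in B -> exists lam, gmul a b = sc lam b.
Proof.
case: hB => _ _ _ h _ aK bB; have [lam Hl] := h a b aK bB.
by exists lam; apply/ffunP => x; rewrite Hl scE.
Qed.

Lemma EB_nth_nz i : (i < size B)%N -> nth 0 B i != 0.
Proof.
move=> iB; apply/eqP => b0; case: hB => _ hind _ _ _.
have H0 : forall x, \sum_(k < size B) (k == i :> nat)%:R * (nth 0 B k) x = 0 :> algC.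
  move=> x; apply: big1 => k _; case: eqP => [->|_]; last by rewrite mul0r.
  by rewrite b0 ffunE mulr0.
by have := hind (fun k => (k == i)%:R) H0 i iB; rewrite eqxx => /eqP; rewrite oner_eq0.
Qed.

Lemma EB_nz b : b \in B -> b != 0.
Proof. by move=> bB; rewrite -(nth_index 0 bB); apply: EB_nth_nz; rewrite index_mem. Qed.

Lemma EB_idem b : b \in B -> gmul b b = b.
Proof.
move=> bB; case: hB => _ _ _ _ h; rewrite -(nth_index 0 bB).
by rewrite h ?index_mem // eqxx.
Qed.

Lemma EB_orth b c : b \in B -> c \in B -> b != c -> gmul b c = 0.
Proof.
move=> bB cB bc; case: hB => _ _ _ _ h; rewrite -(nth_index 0 bB) -(nth_index 0 cB).
rewrite h ?index_mem //; case: eqP => // eij.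
by move: bc; rewrite -(nth_index 0 bB) -(nth_index 0 cB) eij eqxx.
Qed.

Lemma EB_sum1 : (1 \in K)%g -> \sum_(b <- B) b = delta 1%g.
Proof.
move=> K1; case: hB => _ _ hspan _ horth.
have d1 : in_ga K (delta 1%g).
  by move=> x xK; rewrite ffunE; case: eqP xK => // ->; rewrite K1.
have [c Hc] := hspan (delta 1%g) d1.
have D : delta 1%g = \sum_(i < size B) sc (c i) (nth 0 B i).
  by apply/ffunP => x; rewrite Hc sum_ffunE; apply: eq_bigr => i _; rewrite scE.
have c1 : forall j, (j < size B)%N -> c j = 1.
  move=> j jB; have := gmul1l (nth 0 B j); rewrite D gmul_suml.
  rewrite (bigD1 (Ordinal jB)) //= big1 ?addr0; last first.
    move=> i /negbTE ij; rewrite gmulZl horth //; case: eqP => [ei|_].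
      by move: ij; rewrite -(inj_eq val_inj) /= ei eqxx.
    by apply/ffunP => x; rewrite !ffunE mulr0.
  rewrite gmulZl horth // eqxx => E.
  have [x nz] : exists x, nth 0 B j x != 0.
    case: (boolP [exists x, nth 0 B j x != 0]) => [/existsP//|/existsPn H].
    have := EB_nth_nz jB; case/eqP; apply/ffunP => x.
    by have := H x; rewrite negbK ffunE => /eqP.
  apply/eqP; rewrite -subr_eq0.
  have := congr1 (fun f : ga gT => f x) E; rewrite scE => E'.
  apply/eqP; apply: (mulIf nz); rewrite mul0r mulrBl mul1r E' subrr //.
rewrite D (big_nth 0) big_mkord; apply: eq_bigr => i _.
by apply/ffunP => x; rewrite scE c1 ?mul1r.
Qed.

End EB.

Section Grp.
Variables (gT : finGroupType) (G N H : {group gT}).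
Hypotheses (hsd : (N ><| H)%g = G) (abN : abelian N) (abH : abelian H).

Lemma nNG : (N <| G)%g. Proof. by case/sdprod_context: hsd. Qed.
Lemma sHG : H \subset G. Proof. by case/sdprod_context: hsd. Qed.
Lemma sNG : N \subset G. Proof. by case/andP: nNG. Qed.
Lemma NHG : (N * H)%g = G. Proof. by case/sdprod_context: hsd. Qed.
Lemma tiNH : (N :&: H = 1)%g. Proof. by case/sdprod_context: hsd. Qed.

Lemma memJN x g : g \in G -> ((x ^ g)%g \in N) = (x \in N).
Proof. move=> gG; apply: memJ_norm; case/andP: nNG => _ /subsetP; exact. Qed.

Lemma decG x : x \in G -> exists2 n, n \in N & exists2 h, h \in H & x = (n * h)%g.
Proof. by rewrite -NHG => /mulsgP[n h nN hH ->]; exists n => //; exists h. Qed.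

Lemma uniqH k h : k \in H -> h \in H -> (k * h^-1)%g \in N -> k = h.
Proof.
move=> kH hH kN; have : (k * h^-1)%g \in (N :&: H)%g by rewrite inE kN groupM ?groupV.
by rewrite tiNH inE -eq_mulgV1 => /eqP.
Qed.
Arguments uniqH : clear implicits.

Lemma commN a b : a \in N -> b \in N -> commute a b.
Proof. by move=> aN bN; apply: (centsP abN a aN b bN). Qed.

Lemma commH a b : a \in H -> b \in H -> commute a b.
Proof. by move=> aN bN; apply: (centsP abH a aN b bN). Qed.

Lemma orbP (v w : ga gT) :
  reflect (exists2 k, k \in H & w = gconj v k) (w \in hconj_orbit H v).
Proof.
rewrite /hconj_orbit mem_undup; apply: (iffP mapP) => [[k]|[k]].
  by rewrite mem_enum => kH ->; exists k.
by move=> kH ->; exists k; rewrite ?mem_enum.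
Qed.

Lemma orb_uniq v : uniq (hconj_orbit H v).
Proof. exact: undup_uniq. Qed.

Lemma orb_self v : v \in hconj_orbit H v.
Proof. by apply/orbP; exists 1%g; rewrite ?group1 ?gconj1. Qed.

Lemma stabP v h :
  reflect (h \in H /\ forall w, w \in hconj_orbit H v -> gconj w h = w)
          (h \in orbit_stab H v).
Proof.
rewrite inE; apply: (iffP andP) => [[hH /allP A]|[hH A]]; split => //.
  by move=> w /A /eqP.
by apply/allP => w /A ->.
Qed.

Lemma stab_sub v : orbit_stab H v \subset H.
Proof. by apply/subsetP => h /stabP[]. Qed.

Lemma stab1 v : 1%g \in orbit_stab H v.
Proof. by apply/stabP; split => [|w _]; rewrite ?group1 ?gconj1. Qed.

Lemma stabV v h w : h \in orbit_stab H v -> w \in hconj_orbit H v -> gconj w h^-1 = w.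
Proof.
case/stabP => _ A wO; rewrite -{1}(A w wO).
by rewrite gconjJ mulVg gconj1.
Qed.

Lemma stab_of_fix v k : k \in H -> gconj v k = v -> k \in orbit_stab H v.
Proof.
move=> kH fx; apply/stabP; split => // w /orbP[j jH ->].
by rewrite gconjJ (commH kH jH) -gconjJ fx.
Qed.

Lemma stab_orb v w : w \in hconj_orbit H v -> orbit_stab H w = orbit_stab H v.
Proof.
case/orbP => j jH ->; apply/setP => h.
have sameO : hconj_orbit H (gconj v j) =i hconj_orbit H v.
  move=> u; apply/orbP/orbP => [[k kH ->]|[k kH ->]].
    by exists (k * j)%g; rewrite ?groupM // gconjJ (commH kH jH).
  exists (k * j^-1)%g; rewrite ?groupM ?groupV // gconjJ mulgKV //.
apply/stabP/stabP => [[hH A]|[hH A]]; split => // u uO.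
  by apply: A; rewrite sameO.
by apply: A; rewrite -sameO.
Qed.

End Grp.

Section ScHelp.
Variable gT : finGroupType.
Implicit Types f g : ga gT.

Lemma nz_wit f : f != 0 -> exists x, f x != 0.
Proof.
move=> fnz; case: (boolP [exists x, f x != 0]) => [/existsP//|/existsPn Hx].
case/eqP: fnz; apply/ffunP => x; by have := Hx x; rewrite negbK ffunE => /eqP.
Qed.

Lemma sc_inj c d f : f != 0 -> sc c f = sc d f -> c = d.
Proof.
move=> /nz_wit[x nz] /(congr1 (fun g : ga gT => g x)); rewrite !scE.
by move/(mulIf nz).
Qed.

Lemma sc1 f : sc 1 f = f. Proof. by apply/ffunP => x; rewrite scE mul1r. Qed.
Lemma sc0 f : sc 0 f = 0. Proof. by apply/ffunP => x; rewrite scE mul0r ffunE. Qed.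
Lemma scA c d f : sc c (sc d f) = sc (c * d) f.
Proof. by apply/ffunP => x; rewrite !scE mulrA. Qed.
Lemma sc_sum (I : Type) (r : seq I) c (F : I -> ga gT) :
  sc c (\sum_(i <- r) F i) = \sum_(i <- r) sc c (F i).
Proof.
apply/ffunP => x; rewrite scE !sum_ffunE mulr_sumr; apply: eq_bigr => i _.
by rewrite scE.
Qed.

End ScHelp.

Section PNsec.
Variables (gT : finGroupType) (G N H : {group gT}) (PN : seq (ga gT)).
Hypotheses (hsd : (N ><| H)%g = G) (abN : abelian N) (abH : abelian H)
  (hPN : is_idem_eigenbasis N PN).

Lemma delta_in (K : {group gT}) a : a \in K -> in_ga K (delta a).
Proof. by move=> aK x xK; rewrite ffunE; case: eqP xK => // ->; rewrite aK. Qed.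

Lemma v_lam v a : v \in PN -> a \in N -> exists lam, forall x, v (a * x)%g = lam * v x.
Proof.
move=> vP aN; have [lam E] := EB_eig hPN (delta_in (groupVr aN)) vP.
exists lam => x; have := congr1 (fun f : ga gT => f x) E.
by rewrite gmul_deltaL scE invgK.
Qed.

Lemma v1nz v : v \in PN -> v 1%g != 0.
Proof.
move=> vP; apply/negP => /eqP v10; have := EB_nz hPN vP; case/eqP.
apply/ffunP => x; rewrite ffunE.
have [xN|xN] := boolP (x \in N); last by rewrite (EB_in hPN vP).
by have [lam E] := v_lam vP xN; rewrite -(mulg1 x) E v10 mulr0.
Qed.

Lemma vM v a x : v \in PN -> a \in N -> v (a * x)%g * v 1%g = v a * v x.
Proof.
move=> vP aN; have [lam E] := v_lam vP aN.
by rewrite E -(mulg1 a) E mulrAC.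
Qed.

Lemma conj_inN f j : in_ga N f -> j \in G -> in_ga N (gconj f j).
Proof. by move=> fN jG x xN; rewrite gconjE fN // (memJN hsd _ jG). Qed.

Lemma commN_ga a b : in_ga N a -> in_ga N b -> gmul a b = gmul b a.
Proof.
move=> aN bN; apply/ffunP => x; rewrite gmulE gmulE'; apply: eq_bigr => y _.
have [yN|yN] := boolP (y \in N); last by rewrite aN ?mulr0 ?mul0r.
rewrite mulrC; congr (_ * _).
have [xN|xN] := boolP (x \in N).
  by rewrite (commN abN (groupVr yN) xN).
by rewrite !bN // ?(groupMl _ (groupVr yN)) ?(groupMr _ (groupVr yN)).
Qed.

Section W.
Variables (v : ga gT) (j : gT).
Hypotheses (vP : v \in PN) (jH : j \in H).
Let jG : j \in G. Proof. by apply: (subsetP (sHG hsd)). Qed.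
Let w := gconj v j.

Lemma w_in : in_ga N w.
Proof. exact: conj_inN (EB_in hPN vP) jG. Qed.

Lemma w1 : w 1%g = v 1%g.
Proof. by rewrite gconjE conj1g. Qed.

Lemma wM a x : a \in N -> w (a * x)%g * w 1%g = w a * w x.
Proof.
move=> aN; rewrite w1 !gconjE conjMg vM //.
by rewrite (memJN hsd _ jG).
Qed.

Lemma w_idem : gmul w w = w.
Proof. by rewrite /w -gconjM (EB_idem hPN vP). Qed.

Lemma w_nz : w != 0.
Proof.
apply: contra (EB_nz hPN vP) => /eqP w0; apply/eqP.
by apply: (@gconj_inj _ j); rewrite /= -/w w0 gconj0.
Qed.

Lemma w_eig a : in_ga N a -> exists lam, gmul a w = sc lam w.
Proof.
move=> aN; have aN' : in_ga N (gconj a j^-1) by apply: conj_inN; rewrite ?groupV.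
have [lam E] := EB_eig hPN aN' vP; exists lam.
by rewrite -[a](gconjK a j^-1) invgK /w -gconjM E gconjZ.
Qed.

End W.

Lemma orth_gen p q : in_ga N p -> in_ga N q -> gmul p p = p -> gmul q q = q ->
  p != 0 -> q != 0 ->
  (forall a, in_ga N a -> exists lam, gmul a p = sc lam p) ->
  (forall a, in_ga N a -> exists lam, gmul a q = sc lam q) ->
  p != q -> gmul p q = 0.
Proof.
move=> pN qN pp qq pnz qnz ep eq pq.
have [l El] := ep q qN; have [m Em] := eq p pN.
have E : sc l p = sc m q by rewrite -El -Em commN_ga.
have [l0|lnz] := eqVneq l 0.
  by rewrite commN_ga // El l0 sc0.
have pE : p = sc (m / l) q.
  by rewrite mulrC -scA -E scA mulVf // sc1.
move: pE; set c := m / l => pE.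
have cc : c = c * c.
  apply: (sc_inj qnz); rewrite -scA -pE.
  by rewrite -{1}pp {1 2}pE gmulZl gmulZr qq -pE.
have [c0|c1] : c = 0 \/ c = 1.
  have : c * (c - 1) = 0 by rewrite mulrBr mulr1 -cc subrr.
  by move/eqP; rewrite mulf_eq0 subr_eq0 => /orP[/eqP|/eqP]; [left|right].
  by move: pnz; rewrite pE c0 sc0 eqxx.
by move: pq; rewrite pE c1 sc1 eqxx.
Qed.

Lemma orb_orth v w w' : v \in PN -> w \in hconj_orbit H v -> w' \in hconj_orbit H v ->
  w != w' -> gmul w w' = 0.
Proof.
move=> vP /(orbP) [j jH ->] /(orbP) [k kH ->].
apply: orth_gen.
- exact: w_in.
- exact: w_in.
- exact: w_idem.
- exact: w_idem.
- exact: w_nz.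
- exact: w_nz.
- by move=> a; apply: w_eig.
- by move=> a; apply: w_eig.
Qed.

End PNsec.

Section Jsec.
Variables (gT : finGroupType) (G N H : {group gT}) (PN : seq (ga gT)) (U : ga gT -> seq (ga gT)).
Hypotheses (hsd : (N ><| H)%g = G) (abN : abelian N) (abH : abelian H)
  (hPN : is_idem_eigenbasis N PN)
  (hU : forall v, v \in PN -> is_idem_eigenbasis (orbit_stab H v) (U v)).

Lemma sum_const_seq (I : Type) (r : seq I) (c : algC) : \sum_(i <- r) c = c *+ size r.
Proof. by elim: r => [|a r IH]; rewrite ?big_nil ?big_cons ?IH ?mulrS. Qed.

Lemma in_ga_sum (K : {set gT}) (I : eqType) (r : seq I) (F : I -> ga gT) :
  (forall i, i \in r -> in_ga K (F i)) -> in_ga K (\sum_(i <- r) F i).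
Proof. by move=> HF x xK; rewrite sum_ffunE big_seq big1 // => i ir; apply: HF. Qed.

Lemma gconj_sum (I : Type) (r : seq I) (F : I -> ga gT) k :
  gconj (\sum_(i <- r) F i) k = \sum_(i <- r) gconj (F i) k.
Proof. by apply/ffunP => x; rewrite gconjE !sum_ffunE; apply: eq_bigr => i _; rewrite gconjE. Qed.

Let sNG := sNG hsd.
Let sHG := sHG hsd.

Lemma prodNH a b n h : in_ga N a -> in_ga H b -> n \in N -> h \in H ->
  gmul a b (n * h)%g = a n * b h.
Proof.
move=> aN bH nN hH; rewrite gmulE' (bigD1 h) //= mulgK big1 ?addr0 // => y yh.
have [yH|yH] := boolP (y \in H); last by rewrite bH ?mulr0.
rewrite aN ?mul0r //; apply: contra yh => Ny.
apply/eqP/esym/(uniqH hsd hH yH).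
by rewrite -(groupMl _ nN) mulgA.
Qed.

Lemma fixH f k : in_ga H f -> k \in H -> gconj f k = f.
Proof.
move=> fH kH; apply/ffunP => x; rewrite gconjE.
have [xH|xH] := boolP (x \in H).
  by rewrite conjgE -(commH abH kH xH) mulKg.
by rewrite !fH // groupJr.
Qed.

Variables (v u : ga gT).
Hypotheses (vP : v \in PN) (uU : u \in U v).

Let O := hconj_orbit H v.
Let S := orbit_stab H v.
Let J := \sum_(w <- O) gmul w u.

Let hUv := hU vP.
Let uS : in_ga S u := EB_in hUv uU.
Let uH : in_ga H u := in_ga_sub (@stab_sub _ H v) uS.
Let vN : in_ga N v := EB_in hPN vP.

Lemma O_in w : w \in O -> in_ga N w.
Proof. by case/orbP => j jH ->; apply: (w_in hsd hPN vP jH). Qed.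

Lemma O_1 w : w \in O -> w 1%g = v 1%g.
Proof. by case/orbP => j jH ->; apply: w1. Qed.

Lemma comm_S a w : in_ga S a -> w \in O -> gmul a w = gmul w a.
Proof.
move=> aS wO; apply/ffunP => x; rewrite gmulE gmulE'; apply: eq_bigr => y _.
have [yS|yS] := boolP (y \in S); last by rewrite aS ?mulr0 ?mul0r.
rewrite mulrC; congr (_ * _).
rewrite -{1}(stabV yS wO) gconjE conjgE invgK.
by rewrite !mulgA mulgV mul1g.
Qed.

Lemma J_in : in_ga G J.
Proof.
apply: in_ga_sum => w wO; apply: in_ga_mul.
  by apply: in_ga_sub sNG (O_in wO).
by apply: in_ga_sub sHG uH.
Qed.


Lemma J_val n h : n \in N -> h \in H -> J (n * h)%g = (\sum_(w <- O) w n) * u h.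
Proof.
move=> nN hH; rewrite sum_ffunE mulr_suml big_seq [RHS]big_seq.
by apply: eq_bigr => w wO; rewrite prodNH //; apply: O_in.
Qed.

Lemma sum_pick (F : ga gT -> ga gT) w : w \in O ->
  \sum_(w' <- O) (if w == w' then F w else 0) = F w.
Proof.
move=> wO; rewrite (bigD1_seq w) ?orb_uniq //= eqxx big1 ?addr0 // => w'.
by rewrite eq_sym => /negbTE ->.
Qed.

Lemma O_idem w : w \in O -> gmul w w = w.
Proof. by case/orbP => j jH ->; exact: (w_idem hPN j vP). Qed.

Lemma J_idem : gmul J J = J.
Proof.
rewrite /J gmul_suml big_seq [RHS]big_seq; apply: eq_bigr => w wO.
rewrite gmul_sumr -[RHS](sum_pick (fun w => gmul w u) wO) big_seq [RHS]big_seq.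
apply: eq_bigr => w' w'O.
rewrite gmulA -(gmulA u w' u) (comm_S uS w'O) (gmulA w' u u) (EB_idem hUv uU) -gmulA.
have [<-|ww] := eqVneq w w'; first by rewrite O_idem.
by rewrite (orb_orth hsd abN hPN vP wO w'O ww) gmul0l.
Qed.

Lemma O_M w a x : w \in O -> a \in N -> w (a * x)%g * w 1%g = w a * w x.
Proof. by case/orbP => j jH -> aN; apply: (wM hsd hPN vP jH). Qed.

Lemma v1nz' : v 1%g != 0.
Proof. exact: (v1nz hPN vP). Qed.

Lemma J_conjH k x : k \in H -> J (x ^ k)%g = J x.
Proof.
move=> kH; rewrite -gconjE; congr (_ x).
rewrite /J gconj_sum; under eq_bigr do rewrite gconjM (fixH uH kH).
rewrite -(big_map (fun w => gconj w k) xpredT (fun w => gmul w u)).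
rewrite (perm_big O) //; apply: uniq_perm.
- by rewrite map_inj_uniq ?orb_uniq //; apply: gconj_inj.
- exact: orb_uniq.
move=> w; apply/mapP/idP => [[w0 /orbP[j jH ->] ->]|/orbP[j jH ->]].
  by apply/orbP; exists (k * j)%g; rewrite ?groupM // gconjJ.
exists (gconj v (k^-1 * j)%g); first by apply/orbP; exists (k^-1 * j)%g; rewrite ?groupM ?groupV.
by rewrite gconjJ mulKVg.
Qed.

Lemma J_conjN n x : n \in N -> J (x ^ n)%g = J x.
Proof.
move=> nN; have nG : n \in G by apply: (subsetP sNG).
have [xG|xG] := boolP (x \in G); last first.
  by rewrite !J_in // groupJr.
have [m mN [h hH ->]] := decG hsd xG.
set q := (n ^ h^-1)%g.
have qN : q \in N by rewrite /q (memJN hsd) // groupV (subsetP sHG).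
have E : ((m * h) ^ n)%g = (n^-1 * (m * q) * h)%g.
  by rewrite /q !conjgE invgK !mulgA mulgKV.
rewrite E (J_val (groupM (groupVr nN) (groupM mN qN)) hH) (J_val mN hH).
have [uh0|uhnz] := eqVneq (u h) 0; first by rewrite uh0 !mulr0.
have hS : h \in S by apply: contraR uhnz => hS; rewrite uS.
congr (_ * u h); apply: eq_big_seq => w wO.
have cnz : w 1%g != 0 by rewrite O_1 // v1nz'.
have A1 := O_M (m * q)%g wO (groupVr nN).
have A2 := O_M q wO mN.
have A3 : w q = w n by rewrite /q -gconjE (stabV hS wO).
have A4 := O_M n wO (groupVr nN); rewrite mulVg in A4.
apply: (mulIf cnz); apply: (mulIf cnz).
rewrite A1 -(mulrA (w n^-1%g)) A2 A3 -[RHS]mulrA A4.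
by rewrite mulrCA.
Qed.

Lemma J_central a : in_ga G a -> gmul a J = gmul J a.
Proof.
apply: central_crit => g x gG.
have [n nN [k kH ->]] := decG hsd gG.
by rewrite conjgM J_conjH // J_conjN.
Qed.

Lemma J_nz : J != 0.
Proof.
have [h0 uh0] := nz_wit (EB_nz hUv uU).
have h0S : h0 \in S by apply: contraR uh0 => hS; rewrite uS.
have h0H : h0 \in H by apply: (subsetP (@stab_sub _ H v)).
have sO : size O != 0%N.
  by apply/eqP => /size0nil O0; move: (orb_self H v); rewrite -/O O0.
apply/eqP => J0; have := congr1 (fun f : ga gT => f (1 * h0)%g) J0.
rewrite J_val // ffunE => /eqP; rewrite mulf_eq0 (negbTE uh0) orbF.
rewrite (eq_big_seq (fun _ => v 1%g)); last by move=> w wO; rewrite O_1.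
by rewrite sum_const_seq -mulr_natr mulf_eq0 (negbTE v1nz') pnatr_eq0 (negbTE sO).
Qed.

End Jsec.

Section Key.
Variables (gT : finGroupType) (G N H : {group gT}) (PN : seq (ga gT)).
Hypotheses (hsd : (N ><| H)%g = G) (abN : abelian N) (abH : abelian H)
  (hPN : is_idem_eigenbasis N PN).
Variables (v : ga gT) (z : ga gT).
Hypotheses (vP : v \in PN) (zG : in_ga G z)
  (zc : forall a, in_ga G a -> gmul a z = gmul z a).

Let O := hconj_orbit H v.
Let S := orbit_stab H v.
Let F := gmul z v.
Let vN : in_ga N v := EB_in hPN vP.
Let v1nz : v 1%g != 0 := v1nz hPN vP.
Let sNG := sNG hsd.
Let sHG := sHG hsd.

Lemma dv a : a \in N -> gmul (delta a^-1) v = sc (v a / v 1%g) v.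
Proof.
move=> aN; apply/ffunP => x; rewrite gmul_deltaL invgK scE.
by apply: (mulIf v1nz); rewrite (vM hPN) // mulrAC divfK.
Qed.

Lemma FL a x : a \in N -> F (a * x)%g * v 1%g = v a * F x.
Proof.
move=> aN; have dG : in_ga G (delta a^-1) by apply: delta_in; rewrite groupV (subsetP sNG).
have X : gmul (delta a^-1) F = sc (v a / v 1%g) F.
  by rewrite /F -gmulA (zc dG) gmulA dv // gmulZr.
have := congr1 (fun f : ga gT => f x) X; rewrite gmul_deltaL invgK scE => ->.
by rewrite mulrAC divfK.
Qed.

Lemma FR a x : a \in N -> F (x * a)%g * v 1%g = v a * F x.
Proof.
move=> aN; have dN : in_ga N (delta a^-1) by apply: delta_in; rewrite groupV.
have X : gmul F (delta a^-1) = sc (v a / v 1%g) F.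
  by rewrite /F gmulA -(commN_ga abN dN vN) dv // gmulZr.
have := congr1 (fun f : ga gT => f x) X; rewrite gmul_deltaR invgK scE => ->.
by rewrite mulrAC divfK.
Qed.

Lemma Fk0 k : k \in H -> k \notin S -> F k = 0.
Proof.
move=> kH kS; apply/eqP; apply: contraR kS => Fnz.
have kG : k \in G by apply: (subsetP sHG).
have E a : a \in N -> v (a ^ k^-1)%g = v a.
  move=> aN; have aN' : (a ^ k^-1)%g \in N by rewrite (memJN hsd) // groupV.
  apply: (mulIf Fnz).
  have e : (k * a)%g = (a ^ k^-1 * k)%g by rewrite conjgE invgK -mulgA mulgKV.
  by rewrite -FL // -e FR.
have gv : gconj v k^-1 = v.
  apply/ffunP => x; rewrite gconjE.
  have [xN|xN] := boolP (x \in N); first by rewrite E.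
  by rewrite !vN // (memJN hsd) // groupV.
have : gconj (gconj v k^-1) k = v by rewrite gconjJ mulgV gconj1.
by rewrite gv => gk; apply: (stab_of_fix abH kH gk).
Qed.

Definition fK : ga gT := [ffun x => if x \in S then F x / v 1%g else 0].

Lemma fK_in : in_ga S fK.
Proof. by move=> x xS; rewrite ffunE (negbTE xS). Qed.

Lemma vf : gmul v fK = F.
Proof.
apply/ffunP => x; rewrite gmulE'.
have [xG|xG] := boolP (x \in G); last first.
  have FG : in_ga G F by apply: in_ga_mul => //; apply: in_ga_sub sNG vN.
  rewrite (FG x xG) big1 // => y _.
  have [yS|yS] := boolP (y \in S); last by rewrite ffunE (negbTE yS) mulr0.
  have yH : y \in H by apply: (subsetP (@stab_sub _ H v)).
  rewrite vN ?mul0r //; apply: contra xG => xyN.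
  by rewrite -(NHG hsd) -(mulgKV y x) mem_mulg.
have [m mN [k kH ->]] := decG hsd xG.
rewrite (bigD1 k) //= big1 ?addr0; last first.
  move=> y yk.
  have [yS|yS] := boolP (y \in S); last by rewrite ffunE (negbTE yS) mulr0.
  have yH : y \in H by apply: (subsetP (@stab_sub _ H v)).
  rewrite vN ?mul0r //; apply: contra yk => mky.
  apply/eqP/esym/(uniqH hsd kH yH).
  by rewrite -(groupMl _ mN) mulgA.
rewrite mulgK ffunE.
case: ifP => kS.
  by apply: (mulIf v1nz); rewrite FL // -mulrA divfK.
rewrite mulr0; have := FL k mN; rewrite (Fk0 kH (negbT kS)) mulr0 => /eqP.
by rewrite mulf_eq0 (negbTE v1nz) orbF => /eqP ->.
Qed.

Lemma Key : exists2 f, in_ga S f & forall w, w \in O -> gmul z w = gmul w f.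
Proof.
exists fK; first exact: fK_in.
move=> w /orbP[j jH ->].
have jG : j \in G by apply: (subsetP sHG).
have zj : gconj z j = z.
  by apply/ffunP => x; rewrite gconjE (central_conj zc x jG).
have fH : in_ga H fK by apply: in_ga_sub (@stab_sub _ H v) fK_in.
by rewrite -{1}zj -gconjM -/F -vf gconjM (fixH abH fH jH).
Qed.

End Key.

Section Final.
Variables (gT : finGroupType) (G N H : {group gT}) (PN : seq (ga gT)) (U : ga gT -> seq (ga gT)).
Hypotheses (hsd : (N ><| H)%g = G) (abN : abelian N) (abH : abelian H)
  (hPN : is_idem_eigenbasis N PN)
  (hU : forall v, v \in PN -> is_idem_eigenbasis (orbit_stab H v) (U v)).

Definition JJ v u := \sum_(w <- hconj_orbit H v) gmul w u.

Lemma JJ_props v u : v \in PN -> u \in U v ->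
  [/\ JJ v u != 0, in_ga G (JJ v u), (forall a, in_ga G a -> gmul a (JJ v u) = gmul (JJ v u) a)
    & gmul (JJ v u) (JJ v u) = JJ v u].
Proof.
move=> vP uU; split.
- exact: (J_nz hsd hPN hU vP uU).
- exact: (J_in hsd hPN hU vP uU).
- by move=> a aG; apply: (J_central hsd abH hPN hU vP uU aG).
- exact: (J_idem hsd abN hPN hU vP uU).
Qed.

Lemma KeyJ v u z : v \in PN -> u \in U v -> in_ga G z ->
  (forall a, in_ga G a -> gmul a z = gmul z a) ->
  exists mu, gmul z (JJ v u) = sc mu (JJ v u) /\ gmul (gmul z v) u = sc mu (gmul v u).
Proof.
move=> vP uU zG zc.
have [f fS hf] := Key hsd abN abH hPN vP zG zc.
have [mu Emu] := EB_eig (hU vP) fS uU.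
have step w : w \in hconj_orbit H v -> gmul z (gmul w u) = sc mu (gmul w u).
  by move=> wO; rewrite -gmulA hf // gmulA Emu gmulZr.
exists mu; split; last by rewrite gmulA step // orb_self.
rewrite /JJ gmul_sumr sc_sum big_seq [RHS]big_seq.
by apply: eq_bigr => w wO; rewrite step.
Qed.

End Final.

Unset Implicit Arguments. Set Strict Implicit.

Theorem mainTheorem8 (gT : finGroupType) (G N H : {group gT})
    (PN : seq (ga gT)) (U : ga gT -> seq (ga gT)) :
  (N ><| H)%g = G -> abelian N -> abelian H ->
  is_idem_eigenbasis N PN ->
  (forall v, v \in PN -> is_idem_eigenbasis (orbit_stab H v) (U v)) ->
  forall J : ga gT,
    (exists2 v, v \in PN &
       exists2 u, u \in U v & J = \sum_(w <- hconj_orbit H v) gmul w u)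
    <-> primitive_central_idem G J.
Proof.
move=> hsd abN abH hPN hU J; rewrite /primitive_central_idem /central_idem; split.
  case=> v vP [u uU ->]; rewrite -/(JJ H v u).
  have [Jnz JG Jc Ji] := JJ_props hsd abN abH hPN hU vP uU.
  split => //.
  case=> I1 [I2 [n1 n2 [I1G I1c I1i] [I2G I2c I2i] [E12 o12 o21]]].
  have [m1 [E1 _]] := KeyJ hsd abN abH hPN hU vP uU I1G I1c.
  have [m2 [E2 _]] := KeyJ hsd abN abH hPN hU vP uU I2G I2c.
  have I1E : I1 = sc m1 (JJ H v u) by rewrite -E1 E12 gmulDr I1i o12 addr0.
  have I2E : I2 = sc m2 (JJ H v u) by rewrite -E2 E12 gmulDr I2i o21 add0r.
  move: o12; rewrite I1E I2E gmulZl gmulZr Ji scA => E0.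
  have : m1 * m2 = 0 by apply: (sc_inj Jnz); rewrite E0 sc0.
  move/eqP; rewrite mulf_eq0 => /orP[/eqP m10|/eqP m20].
    by move: n1; rewrite I1E m10 sc0 eqxx.
  by move: n2; rewrite I2E m20 sc0 eqxx.
case=> enz [eG ec ei] nsplit.
have esum : J = \sum_(v <- PN) \sum_(u <- U v) gmul (gmul J v) u.
  rewrite -{1}(gmul1r J) -(EB_sum1 hPN (group1 N)) gmul_sumr big_seq [RHS]big_seq.
  apply: eq_bigr => v vP.
  by rewrite -{1}(gmul1r (gmul J v)) -(EB_sum1 (hU v vP) (stab1 H v)) gmul_sumr.
have [v vP [u uU nz]] : exists2 v, v \in PN & exists2 u, u \in U v & gmul (gmul J v) u != 0.
  case: (boolP (has (fun v => has (fun u => gmul (gmul J v) u != 0) (U v)) PN)).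
    by case/hasP => v vP /hasP[u uU nz]; exists v => //; exists u.
  move=> /hasPn A; case/eqP: enz; rewrite esum big_seq big1 // => v vP.
  rewrite big_seq big1 // => u uU.
  by have /hasPn B := A v vP; have := B u uU; rewrite negbK => /eqP.
exists v => //; exists u => //.
have [Jnz JG Jc Ji] := JJ_props hsd abN abH hPN hU vP uU.
have [mu [E1 E2]] := KeyJ hsd abN abH hPN hU vP uU eG ec.
have munz : mu != 0 by apply: contra nz; rewrite E2 => /eqP ->; rewrite sc0.
have eJ : gmul J (JJ H v u) = JJ H v u.
  have idem : gmul (gmul J (JJ H v u)) (gmul J (JJ H v u)) = gmul J (JJ H v u).
    set K := JJ H v u.
    rewrite (gmulA J K) -(gmulA K J K) (ec _ JG) (gmulA J K K) -(gmulA J J).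
    by rewrite ei Ji.
  move: idem; rewrite E1 gmulZl gmulZr Ji scA => E3.
  have : mu * mu = 1 * mu by rewrite mul1r; apply: (sc_inj Jnz).
  by move/(mulIf munz) => ->; rewrite sc1.
have [eJ0|neJ] := eqVneq (J - JJ H v u) 0.
  by apply/eqP; rewrite -subr_eq0 eJ0.
exfalso; apply: nsplit; exists (JJ H v u), (J - JJ H v u).
have Je : gmul (JJ H v u) J = JJ H v u by rewrite (ec _ JG).
split => //.
- split => //.
  + by move=> x xG; rewrite !ffunE eG // JG // subr0.
  + by move=> a aG; rewrite gmulBr gmulBl ec // Jc.
  by rewrite gmulBl !gmulBr ei eJ Je Ji subrr subr0.
split.
- by rewrite addrC subrK.
- by rewrite gmulBr Je Ji subrr.
by rewrite gmulBl eJ Ji subrr.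
Qed.
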